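(* Let $S>0$, $K\ge2$, let $N_1,\dots,N_K$ be positive integers, and for $q\in\{1,\dots,K-1\}$ let $t_q$ be the unique solution in $t>1$ of $$t^2\ln t-(t^2-1)+\frac{t\sum_{k=1}^{q}N_k+N_{q+1}}{S+\sum_{k=1}^{K}N_k}(t-1)=0.$$ Then $t_q<t_{root}$ for all $q=1,\dots,K-1$, where $t_{root}\approx 2.21846$ is the larger root of the equation $t^2\ln t-(t^2-1)=0$. *)

(* Defs.v *)
From Stdlib Require Import Reals Lra Lia.
Open Scope R_scope.

Fixpoint psum (N : nat -> nat) (q : nat) : R :=
  match q with
  | O => 0
  | Datatypes.S q' => psum N q' + INR (N q)
  end.

Definition groot (t : R) : R := t ^ 2 * ln t - (t ^ 2 - 1).

(* Main.v *)
Require Import Defs.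
From Stdlib Require Import Reals Lra Lia.
Open Scope R_scope.

Lemma psum_nonneg N q : 0 <= psum N q.
Proof. induction q; simpl; [lra|]. pose proof (pos_INR (N (S q))). lra. Qed.

Lemma groot_cont_pt x : 0 < x -> continuity_pt groot x.
Proof.
  intro Hx. unfold groot.
  apply continuity_pt_minus.
  - apply continuity_pt_mult.
    + apply derivable_continuous_pt. apply derivable_pt_pow.
    + apply derivable_continuous_pt. exists (/ x). apply derivable_pt_lim_ln; auto.
  - apply continuity_pt_minus.
    + apply derivable_continuous_pt. apply derivable_pt_pow.
    + apply continuity_pt_const. intros a b; reflexivity.
Qed.

Theorem corollary1
  (s : R) (K : nat) (N : nat -> nat)
  (hs : 0 < s) (hK : (2 <= K)%nat)
  (hN : forall k : nat, (1 <= k <= K)%nat -> (0 < N k)%nat)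
  (q : nat) (hq : (1 <= q <= K - 1)%nat)
  (t : R) (ht : 1 < t)
  (heq : t ^ 2 * ln t - (t ^ 2 - 1)
         + (t * psum N q + INR (N (q + 1)%nat)) / (s + psum N K) * (t - 1) = 0)
  (r : R) (hr0 : 0 < r) (hr : groot r = 0)
  (hrmax : forall u : R, 0 < u -> groot u = 0 -> u <= r) :
  t < r.
Proof.
  assert (HN : (0 < INR (N (q + 1)%nat))).
  { apply lt_0_INR. apply hN. lia. }
  pose proof (psum_nonneg N q). pose proof (psum_nonneg N K).
  assert (Hc : 0 < (t * psum N q + INR (N (q + 1)%nat)) / (s + psum N K) * (t - 1)).
  { apply Rmult_lt_0_compat; [|lra]. apply Rdiv_lt_0_compat; nra. }
  assert (Hg : groot t < 0) by (unfold groot; lra).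
  destruct (Rlt_or_le t r) as [Hlt|Hge]; [exact Hlt|exfalso].
  set (f := fun u => groot (t + u ^ 2)).
  assert (Hf : continuity f).
  { intro x. unfold f.
    apply (continuity_pt_comp (fun u => t + u ^ 2) groot).
    - apply derivable_continuous_pt. apply derivable_pt_plus.
      + apply derivable_pt_const. + apply derivable_pt_pow.
    - apply groot_cont_pt. pose proof (pow2_ge_0 x). lra. }
  assert (Hf0 : f 0 < 0). { unfold f. replace (t + 0 ^ 2) with t by ring. exact Hg. }
  assert (Hf2 : 0 < f 2).
  { unfold f, groot. replace (t + 2 ^ 2) with (t + 4) by ring.
    assert (1 <= ln (t + 4)).
    { rewrite <- ln_exp with 1. left. apply ln_increasing. apply exp_pos.
      pose proof exp_le_3. lra. }
    assert (0 < (t+4)^2) by (apply pow_lt; lra). nra. }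
  destruct (IVT f 0 2 Hf ltac:(lra) Hf0 Hf2) as [z [Hz Hfz]].
  unfold f in Hfz.
  pose proof (pow2_ge_0 z).
  assert (Hu := hrmax (t + z ^ 2) ltac:(lra) Hfz).
  assert (Hz0 : z ^ 2 = 0) by lra.
  rewrite Hz0, Rplus_0_r in Hfz. lra.
Qed.
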